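(* Let $Z$ be an absolutely continuous real random variable with cdf $F$, let $(z_n)_{n\ge1}$ be a real sequence with $z_n\to z$, and let $\beta\in(0,1]$. Then $LD_S^\beta(z_n,F)\to LD_S^\beta(z,F)$ as $n\to\infty$.
   Context: $\lambda_z^\beta=\inf\{\lambda>0: F(z+\lambda)-F(z-\lambda)\ge\beta\}$ and $LD_S^\beta(z,F)=\frac{2}{\beta^2}\big(F(z+\lambda_z^\beta)-F(z)\big)\big(F(z)-F(z-\lambda_z^\beta)\big)$. *)

(* Defs.v *)
From HB Require Import structures.
From mathcomp Require Import all_boot all_order all_algebra.
From mathcomp Require Import all_classical all_reals all_analysis.
Set Implicit Arguments. Unset Strict Implicit. Unset Printing Implicit Defensive.
Import Order.TTheory GRing.Theory Num.Theory.
Import numFieldNormedType.Exports.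
Local Open Scope classical_set_scope.
Local Open Scope ring_scope.

Definition cdfR d (T : measurableType d) (R : realType) (P : probability T R)
  (Z : {RV P >-> R}) (r : R) : R := fine (cdf Z r).

(* Extension of a cdf to the extended reals: F(+oo) = 1, F(-oo) = 0
   (the limits of any cdf). *)
Definition Fbar (R : realType) (F : R -> R) (x : \bar R) : R :=
  match x with
  | r%:E => F r
  | +oo%E => 1
  | -oo%E => 0
  end.

(* lambda_z^beta = inf { lambda > 0 : F(z+lambda) - F(z-lambda) >= beta },
   computed in the extended reals (= +oo when the set is empty). *)
Definition lambdaS (R : realType) (beta : R) (z : R) (F : R -> R) : \bar R :=
  ereal_inf [set l%:E | l in [set l : R | 0 < l /\ beta <= F (z + l) - F (z - l)]].

Definition LD_S (R : realType) (beta : R) (z : R) (F : R -> R) : R :=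
  let l := lambdaS beta z F in
  2 / beta ^+ 2 * (Fbar F (z%:E + l)%E - F z) * (F z - Fbar F (z%:E - l)%E).

(* Main.v *)
Require Import Defs.
From HB Require Import structures.
From mathcomp Require Import all_boot all_order all_algebra.
From mathcomp Require Import all_classical all_reals all_analysis.
From mathcomp Require Import lra.
Import Order.TTheory GRing.Theory Num.Theory.
Import numFieldNormedType.Exports.
Local Open Scope classical_set_scope.
Local Open Scope ring_scope.

Section cdfprops.
Variables (R : realType) (d : measure_display) (T : measurableType d)
  (P : probability T R) (Z : {RV P >-> R}).

Lemma cdf_fin x : cdf Z x \is a fin_num.
Proof. exact: fin_num_measure. Qed.

Lemma cdfR_ge0 x : 0 <= cdfR Z x.
Proof. exact: fine_ge0. Qed.

Lemma cdfR_le1 x : cdfR Z x <= 1.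
Proof. by rewrite /cdfR -lee_fin fineK ?cdf_fin ?cdf_le1. Qed.

Lemma cdfR_mono x y : x <= y -> cdfR Z x <= cdfR Z y.
Proof. by move=> xy; rewrite /cdfR fine_le ?cdf_fin ?cdf_nondecreasing. Qed.

Lemma cdfRE x : (cdfR Z x)%:E = cdf Z x.
Proof. by rewrite /cdfR fineK ?cdf_fin. Qed.

Lemma cdfR_right a : cdfR Z (a + n.+1%:R^-1) @[n --> \oo] --> cdfR Z a.
Proof.
apply: (@fine_cvg _ _ _ _ (fun n => cdf Z (a + n.+1%:R^-1))).
rewrite cdfRE.
have := @cdf_right_continuous _ _ _ _ Z a; rewrite -(cdfRE a) => /cvge_at_rightP; apply.
split=> [n|]; first by rewrite ltrDl.
rewrite -[X in _ --> X]addr0; apply: (@cvgD _ R^o); first exact: cvg_cst.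
by rewrite gtr0_cvgV0 ?cvg_shiftS; [exact: cvgr_idn | near=> n].
Unshelve. all: by end_near. Qed.

Lemma itvNyoEbigcup (a : R) : `]-oo, a[%classic =
  \bigcup_n `]-oo, a - n.+1%:R^-1]%classic.
Proof.
apply/seteqP; split => [r|r [n _]] /=; rewrite !in_itv /=.
- move=> ra. have [k rk] := ltr_add_invr ra. exists k => //=.
  by rewrite in_itv /= lerBrDr ltW.
- move=> h; apply: (le_lt_trans h); by rewrite ltrBlDr ltrDl.
Qed.

Lemma cdfR_left (Zac : distribution P Z `<< (@lebesgue_measure R)) a :
  cdfR Z (a - n.+1%:R^-1) @[n --> \oo] --> cdfR Z a.
Proof.
apply: (@fine_cvg _ _ _ _ (fun n => cdf Z (a - n.+1%:R^-1))).
rewrite cdfRE.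
have -> : cdf Z a = distribution P Z `]-oo, a[.
  rewrite /cdf.
  have -> : `]-oo, a]%classic = `]-oo, a[ `|` [set a].
    apply/seteqP; split=> r /=; rewrite !in_itv /=.
      by rewrite le_eqVlt => /orP[/eqP->|->]; [right|left].
    by case=> [/ltW|->].
  apply/(null_setU _ _).1 => //.
  apply: Zac; apply/measure0_null_setP => //.
  exact: lebesgue_measure_set1.
rewrite itvNyoEbigcup.
have := @nondecreasing_cvg_mu _ _ _ (distribution P Z) (fun n => `]-oo, a - n.+1%:R^-1]%classic).
apply => //; first by apply: bigcup_measurable.
move=> m n mn; apply/subsetPset => x /=; rewrite !in_itv /= => /le_trans; apply.
by rewrite lerB // lef_pV2 ?posrE // ler_nat.
Qed.

Lemma seq_near (u : nat -> R) (l e : R) : u n @[n --> \oo] --> l -> 0 < e ->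
  exists N, forall n, (N <= n)%N -> `|l - u n| < e.
Proof.
move=> /cvgrPdist_lt /(_ e) h e0; have [N _ HN] := h e0.
by exists N => n Nn; apply: HN.
Qed.

Lemma cdfR_cont (Zac : distribution P Z `<< (@lebesgue_measure R)) a e : 0 < e ->
  exists2 dl, 0 < dl & forall y, `|y - a| < dl -> `|cdfR Z y - cdfR Z a| < e.
Proof.
move=> e0.
have [N1 H1] := seq_near _ _ _ (cdfR_left Zac a) e0.
have [N2 H2] := seq_near _ _ _ (cdfR_right a) e0.
set N := maxn N1 N2.
exists N.+1%:R^-1; first by rewrite invr_gt0 ltr0n.
have h1 := H1 N (leq_maxl _ _); have h2 := H2 N (leq_maxr _ _).
move=> y; rewrite ltr_norml => /andP[hy1 hy2].
move: h1 h2 hy1 hy2; set δ := N.+1%:R^-1; clearbody δ => h1 h2 hy1 hy2.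
have hl : cdfR Z (a - δ) <= cdfR Z y by apply: cdfR_mono; lra.
have hr : cdfR Z y <= cdfR Z (a + δ) by apply: cdfR_mono; lra.
move: h1 h2; rewrite !ltr_norml => /andP[? ?] /andP[? ?].
apply/andP; split; lra.
Qed.

Lemma cdfR_lim e : 0 < e -> exists M, 1 - e < cdfR Z M /\ cdfR Z (- M) < e.
Proof.
move=> e0.
have hy : cdfR Z @ +oo%R --> (1:R).
  exact: fine_cvg (cvg_cdfy1 Z).
have hNy : cdfR Z @ -oo%R --> (0:R).
  exact: fine_cvg (cvg_cdfNy0 Z).
have [M [_ HM]] := (cvgrPdist_lt _ _).1 hy e e0.
have [M' [_ HM']] := (cvgrPdist_lt _ _).1 hNy e e0.
exists (`|M| + `|M'| + 1); split.
  have := HM (`|M| + `|M'| + 1).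
  have : M < `|M| + `|M'| + 1.
    have := ler_norm M; have := normr_ge0 M'; lra.
  move=> h /(_ h); rewrite ltr_norml => /andP[? ?]; lra.
have := HM' (- (`|M| + `|M'| + 1)).
have : - (`|M| + `|M'| + 1) < M'.
  have := lerNnormlW (lexx `|M'|); have := normr_ge0 M; lra.
move=> h /(_ h); rewrite ltr_norml => /andP[? ?]; lra.
Qed.
End cdfprops.
Section abstr.
Variables (R : realType) (F : R -> R) (beta : R).
Variables (F0 : forall x, 0 <= F x) (F1 : forall x, F x <= 1)
  (Fmono : forall x y, x <= y -> F x <= F y)
  (Fc : forall a e, 0 < e ->
     exists2 dl, 0 < dl & forall y, `|y - a| < dl -> `|F y - F a| < e)
  (Flim : forall e, 0 < e -> exists M, 1 - e < F M /\ F (- M) < e)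
  (hb0 : 0 < beta) (hb1 : beta <= 1).

Local Notation S z := [set l%:E | l in [set l : R | 0 < l /\ beta <= F (z + l) - F (z - l)]].

Lemma lam_ge0 z : (0 <= lambdaS beta z F)%E.
Proof.
by apply: le_ereal_inf_tmp => _ [l [l0 _] <-]; rewrite lee_fin ltW.
Qed.

Lemma lam_le z l : 0 < l -> beta <= F (z + l) - F (z - l) ->
  (lambdaS beta z F <= l%:E)%E.
Proof. by move=> l0 hl; apply: ereal_inf_lbound; exists l. Qed.

Lemma lam_pinfty z : lambdaS beta z F = +oo%E -> beta = 1.
Proof.
move=> h; apply/eqP; rewrite eq_le hb1 /=; rewrite leNgt; apply/negP => b1.
have [M [hM1 hM2]] := Flim ((1 - beta) / 2) ltac:(lra).
set l := `|M| + `|z| + 1.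
have l0 : 0 < l by rewrite /l; have := normr_ge0 M; have := normr_ge0 z; lra.
have h1 : F M <= F (z + l).
  apply: Fmono; rewrite /l; have := ler_norm M; have := lerNnormlW (lexx `|z|); lra.
have h2 : F (z - l) <= F (- M).
  apply: Fmono; rewrite /l; have := ler_norm M; have := ler_norm z; lra.
have := @lam_le z l l0 ltac:(lra).
by rewrite h leye_eq.
Qed.

Lemma g_cont z r e : 0 < e -> exists2 dl, 0 < dl & forall y, `|y - r| < dl ->
  `|(F (z + y) - F (z - y)) - (F (z + r) - F (z - r))| < e.
Proof.
move=> e0.
have [d1 d10 H1] := Fc (z + r) (e / 2) ltac:(lra).
have [d2 d20 H2] := Fc (z - r) (e / 2) ltac:(lra).
exists (Num.min d1 d2); first by rewrite lt_min d10 d20.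
move=> y; rewrite lt_min => /andP[y1 y2].
have := H1 (z + y); have := H2 (z - y).
have -> : z - y - (z - r) = - (y - r) by lra.
have -> : z + y - (z + r) = y - r by lra.
rewrite normrN => /(_ y2) + /(_ y1).
rewrite !ltr_norml => /andP[? ?] /andP[? ?]; apply/andP; split; lra.
Qed.

Lemma lam_fin z r : lambdaS beta z F = r%:E -> F (z + r) - F (z - r) = beta.
Proof.
move=> hl; have r0 : 0 <= r by rewrite -lee_fin -hl lam_ge0.
apply/eqP; rewrite eq_le; apply/andP; split.
- rewrite leNgt; apply/negP => hgt.
  have [dl dl0 Hd] := g_cont z r (F (z + r) - F (z - r) - beta) ltac:(lra).
  have rpos : 0 < r.
    rewrite lt_neqAle r0 andbT; apply/negP => /eqP r0'.
    by move: hgt; rewrite -r0' addr0 subr0 subrr => h'; have := lt_trans hb0 h'; rewrite ltxx.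
  set y := r - Num.min dl r / 2.
  have hm1 : 0 < Num.min dl r by rewrite lt_min dl0 rpos.
  have hm2 : Num.min dl r <= dl by rewrite ge_min lexx.
  have hm3 : Num.min dl r <= r by rewrite ge_min lexx orbT.
  have := Hd y; rewrite /y.
  have -> : r - Num.min dl r / 2 - r = - (Num.min dl r / 2) by lra.
  rewrite normrN ger0_norm; last lra.
  move=> /(_ ltac:(lra)); rewrite ltr_norml => /andP[hh _].
  have := @lam_le z (r - Num.min dl r / 2) ltac:(lra) ltac:(lra).
  rewrite hl lee_fin; lra.
- rewrite leNgt; apply/negP => hlt.
  have [dl dl0 Hd] := g_cont z r (beta - (F (z + r) - F (z - r))) ltac:(lra).
  have : (ereal_inf (S z) < (r + dl)%:E)%E.
    by rewrite -/(lambdaS beta z F) hl lte_fin ltrDl.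
  move=> /ereal_inf_lt [_ [l [l0 hl2] <-]]; rewrite lte_fin => lr.
  have rl : r <= l by rewrite -lee_fin -hl; apply: lam_le.
  have := Hd l; rewrite ger0_norm; last lra.
  move=> /(_ ltac:(clear hl; lra)); rewrite ltr_norml => /andP[_ hh]; clear hl; lra.
Qed.


Lemma lam_real (b1 : beta < 1) z :
  lambdaS beta z F = (fine (lambdaS beta z F))%:E.
Proof.
move: (lam_ge0 z) (@lam_pinfty z).
case: (lambdaS beta z F) => [r|_ /(_ erefl) b|] //=.
by move: b1; rewrite b ltxx.
Qed.

Definition lam z := fine (lambdaS beta z F).
Definition Aa z := F (z + lam z).

Lemma lamE (b1 : beta < 1) z : F (z - lam z) = Aa z - beta.
Proof.
have := @lam_fin z _ (lam_real b1 z); rewrite /Aa /lam => h; lra.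
Qed.

Lemma A_cont (b1 : beta < 1) z e : 0 < e ->
  exists2 dl, 0 < dl & forall y, `|y - z| < dl -> `|Aa y - Aa z| < e.
Proof.
move=> e0.
have [d0 d00 H0] := Fc (z + lam z) e e0.
exists (d0 / 2); first lra.
move=> y; rewrite ltr_norml => /andP[hy1 hy2].
have ey := lamE b1 y; have ez := lamE b1 z.
move: ey ez H0; rewrite /Aa.
move: (lam y) (lam z) => ly lz ey ez H0.
have mono' : forall x x', F x < F x' -> x < x'.
  by move=> x x' hx; rewrite ltNge; apply/negP => /Fmono; lra.
rewrite ltr_norml; apply/andP; split.
- rewrite ltNge; apply/negP => h.
  have h1 : y + ly < z + lz by apply: mono'; lra.
  have h2 : y - ly < z - lz by apply: mono'; lra.
  have hd : `|y + ly - (z + lz)| < d0.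
    by rewrite ltr_norml; apply/andP; split; lra.
  have := H0 _ hd; rewrite ltr_norml => /andP[? ?]; lra.
- rewrite ltNge; apply/negP => h.
  have h1 : z + lz < y + ly by apply: mono'; lra.
  have h2 : z - lz < y - ly by apply: mono'; lra.
  have hd : `|y + ly - (z + lz)| < d0.
    by rewrite ltr_norml; apply/andP; split; lra.
  have := H0 _ hd; rewrite ltr_norml => /andP[? ?]; lra.
Qed.


Lemma ed_cvg (f : R -> R) a :
  (forall e, 0 < e -> exists2 dl, 0 < dl & forall y, `|y - a| < dl -> `|f y - f a| < e) ->
  f @ a --> f a.
Proof.
move=> H; apply/cvgrPdist_lt => e e0.
have [dl dl0 Hd] := H e e0.
apply/nbhs_ballP; exists dl => // y /= hy.
by rewrite distrC; apply: Hd; rewrite distrC.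
Qed.

Lemma LD_conv (zn : nat -> R) z (hz : zn @ \oo --> z) :
  (fun n => LD_S beta (zn n) F) @ \oo --> LD_S beta z F.
Proof.
have Fcont : forall a, F @ a --> F a by move=> a; apply: ed_cvg; exact: Fc.
case: (ltrgtP beta 1) => [b1|b1|b1]; last 2 first.
- by move: hb1; rewrite leNgt b1.
- pose h y := 2 / beta ^+ 2 * (1 - F y) * (F y - 0).
  have LDE : forall y, LD_S beta y F = h y.
    move=> y; rewrite /LD_S /h.
    move: (lam_ge0 y) (@lam_fin y).
    case: (lambdaS beta y F) => [r _ /(_ r erefl) hr| |] //=.
    have e1 : F (y + r) = 1 by have := F1 (y + r); have := F0 (y - r); lra.
    have e0 : F (y - r) = 0 by have := F1 (y + r); have := F0 (y - r); lra.
    by rewrite e1 e0.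
  have -> : (fun n => LD_S beta (zn n) F) = h \o zn.
    by apply/funext => n; rewrite LDE.
  rewrite LDE; apply: cvg_comp hz _.
  rewrite /h; apply: cvgM; first apply: cvgM.
  + exact: cvg_cst.
  + apply: cvgB; [exact: cvg_cst | exact: Fcont].
  + apply: cvgB; [exact: Fcont | exact: cvg_cst].
- pose h y := 2 / beta ^+ 2 * (Aa y - F y) * (F y - (Aa y - beta)).
  have LDE : forall y, LD_S beta y F = h y.
    move=> y; rewrite /LD_S (lam_real b1 y) /= -/(lam y) (lamE b1 y).
    by rewrite /h /Aa.
  have -> : (fun n => LD_S beta (zn n) F) = h \o zn.
    by apply/funext => n; rewrite LDE.
  have Acont : Aa @ z --> Aa z by apply: ed_cvg; exact: A_cont.
  rewrite LDE; apply: cvg_comp hz _.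
  rewrite /h; apply: cvgM; first apply: cvgM.
  + exact: cvg_cst.
  + apply: cvgB; [exact: Acont | exact: Fcont].
  + apply: cvgB; [exact: Fcont | apply: cvgB; [exact: Acont | exact: cvg_cst]].
Qed.

End abstr.

Theorem mainTheorem12 (R : realType) (d : measure_display) (T : measurableType d)
  (P : probability T R) (Z : {RV P >-> R})
  (Zac : distribution P Z `<< (@lebesgue_measure R))
  (zn : nat -> R) (z : R) (hz : zn @ \oo --> z)
  (beta : R) (hb0 : 0 < beta) (hb1 : beta <= 1) :
  (fun n => LD_S beta (zn n) (cdfR Z)) @ \oo --> LD_S beta z (cdfR Z).
Proof.
exact: (@LD_conv R (cdfR Z) beta (@cdfR_ge0 R d T P Z) (@cdfR_le1 R d T P Z)
  (@cdfR_mono R d T P Z) (@cdfR_cont R d T P Z Zac) (@cdfR_lim R d T P Z)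
  hb0 hb1 zn z hz).
Qed.
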